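(* Let $f,g\in\mathcal{H}$ with $f\neq g$ as germs. Then there is no real $M>0$ such that $|f(x)|\le M|g(x)|$ and $|g(x)|\le M|f(x)|$ hold for all sufficiently large $x$.
   Context: All functions are real-valued functions defined on some interval $(a,\infty)$. Two such functions are identified if they agree for all sufficiently large $x$; these equivalence classes are germs at $+\infty$. Write $\ln^{(k)}$ for the $k$-fold iterated natural logarithm, with $\ln^{(0)}(x)=x$. Let $\mathcal{H}$ be the smallest set of germs at $+\infty$ satisfying: (i) $\ln^{(k)}\in\mathcal{H}$ for every integer $k\ge0$; (ii) if $f\in\mathcal{H}$, then $\exp\circ f\in\mathcal{H}$, and if moreover $f$ is eventually positive, then $f^\alpha\in\mathcal{H}$ for every real $\alpha>0$; (iii) if $f,g\in\mathcal{H}$ and $f\ne g$ (as germs), then $fg\in\mathcal{H}$; (iv) if $f,g\in\mathcal{H}$ and $f(x)/g(x)\to+\infty$, then $f/g\in\mathcal{H}$. Two functions $f,g$ lie in the same Archimedean class (''commutative big O'', $f=O(g)$) if there is $M>0$ with $|f(x)|\le M|g(x)|$ and $|g(x)|\le M|f(x)|$ for all large $x$. *)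

(* Defs.v *)
From Stdlib Require Import Reals.
Open Scope R_scope.

(* Germs at +oo are represented by total functions R -> R; a property holds
   "eventually" if it holds on some interval (a, +oo). *)
Definition eventually (P : R -> Prop) : Prop :=
  exists a : R, forall x : R, a < x -> P x.

Definition germ_eq (f g : R -> R) : Prop :=
  eventually (fun x => f x = g x).

Definition tends_to_pinfty (f : R -> R) : Prop :=
  forall B : R, eventually (fun x => B < f x).

Fixpoint iter_ln (k : nat) (x : R) : R :=
  match k with
  | O => x
  | S k' => ln (iter_ln k' x)
  end.

(* The class H: smallest set of germs closed under the rules (i)-(iv).
   Since elements are germs, membership is invariant under germ equality
   (rule H_germ). *)
Inductive inH : (R -> R) -> Prop :=
  | H_germ : forall f g, inH f -> germ_eq f g -> inH g
  | H_ln : forall k : nat, inH (iter_ln k)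
  | H_exp : forall f, inH f -> inH (fun x => exp (f x))
  | H_pow : forall f (alpha : R), inH f -> eventually (fun x => 0 < f x) ->
      0 < alpha -> inH (fun x => Rpower (f x) alpha)
  | H_mul : forall f g, inH f -> inH g -> ~ germ_eq f g ->
      inH (fun x => f x * g x)
  | H_div : forall f g, inH f -> inH g ->
      tends_to_pinfty (fun x => f x / g x) ->
      inH (fun x => f x / g x).

(* Main.v *)
Require Import Defs.
From Stdlib Require Import Reals Lra Lia Classical Arith.
Import Defs.
Open Scope R_scope.

Lemma absle (x a : R) : Rabs x <= a <-> -a <= x <= a.
Proof. unfold Rabs; destruct (Rcase_abs x); split; intros; lra. Qed.

Lemma ev1 (P Q : R -> Prop) : eventually P -> (forall x, P x -> Q x) -> eventually Q.
Proof. intros [a Ha] H; exists a; intros; auto. Qed.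

Lemma ev2 (P Q S : R -> Prop) : eventually P -> eventually Q ->
  (forall x, P x -> Q x -> S x) -> eventually S.
Proof.
  intros [a Ha] [b Hb] H; exists (Rmax a b); intros x Hx.
  apply H; [apply Ha|apply Hb]; pose proof (Rmax_l a b); pose proof (Rmax_r a b); lra.
Qed.

Lemma ev3 (P Q T S : R -> Prop) : eventually P -> eventually Q -> eventually T ->
  (forall x, P x -> Q x -> T x -> S x) -> eventually S.
Proof.
  intros HP HQ HT H. apply (ev2 _ _ _ (ev2 _ _ (fun x => P x /\ Q x) HP HQ (fun x a b => conj a b)) HT).
  intros x [] ?; auto.
Qed.

Lemma ev4 (P Q T U S : R -> Prop) : eventually P -> eventually Q -> eventually T -> eventually U ->
  (forall x, P x -> Q x -> T x -> U x -> S x) -> eventually S.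
Proof.
  intros HP HQ HT HU H. apply (ev3 _ _ _ _ (ev2 _ _ (fun x => P x /\ Q x) HP HQ (fun x a b => conj a b)) HT HU).
  intros x [] ??; auto.
Qed.

Fixpoint SpN (P : (R -> R) -> Prop) (n : nat) (v : R -> R) : Prop :=
  match n with
  | O => eventually (fun x => v x = 0)
  | S n' => exists g c w, P g /\ SpN P n' w /\ eventually (fun x => v x = c * g x + w x)
  end.

Lemma SpN_germ P n v w : SpN P n v -> eventually (fun x => v x = w x) -> SpN P n w.
Proof.
  destruct n; simpl.
  - intros H1 H2; apply (ev2 _ _ _ H1 H2); intros; lra.
  - intros (g & c & u & Hg & Hu & He) H2; exists g, c, u; repeat split; auto.
    apply (ev2 _ _ _ He H2); intros; lra.
Qed.

Lemma SpN_mono (P Q : (R -> R) -> Prop) n v : (forall g, P g -> Q g) -> SpN P n v -> SpN Q n v.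
Proof.
  intros HPQ; revert v; induction n; simpl; auto.
  intros v (g & c & u & Hg & Hu & He); exists g, c, u; repeat split; auto.
Qed.

Lemma SpN_scale P n v a : SpN P n v -> SpN P n (fun x => a * v x).
Proof.
  revert v; induction n; simpl.
  - intros v H; apply (ev1 _ _ H); intros x ->; ring.
  - intros v (g & c & u & Hg & Hu & He); exists g, (a * c), (fun x => a * u x); repeat split; auto.
    apply (ev1 _ _ He); intros x ->; ring.
Qed.

Lemma SpN_add P n m v w : SpN P n v -> SpN P m w -> SpN P (n + m) (fun x => v x + w x).
Proof.
  revert v; induction n; simpl.
  - intros v H Hw. apply (SpN_germ _ _ _ _ Hw). apply (ev1 _ _ H); intros x ->; ring.
  - intros v (g & c & u & Hg & Hu & He) Hw; exists g, c, (fun x => u x + w x); repeat split; auto.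
    apply (ev1 _ _ He); intros x ->; ring.
Qed.

Lemma SpN_sub P n m v w : SpN P n v -> SpN P m w -> SpN P (n + m) (fun x => v x - w x).
Proof.
  intros H1 H2. apply (SpN_germ _ _ (fun x => v x + (-1) * w x)).
  - apply SpN_add; auto. apply SpN_scale; auto.
  - exists 0; intros; ring.
Qed.

Lemma partition n P g v : SpN P n v -> exists a m w', (m <= n)%nat /\
  SpN (fun p => P p /\ ~ germ_eq p g) m w' /\ eventually (fun x => v x = a * g x + w' x).
Proof.
  revert v; induction n; simpl.
  - intros v H; exists 0, 0%nat, v; repeat split; auto. simpl. auto.
    exists 0; intros; ring.
  - intros v (p & c & u & Hp & Hu & He).
    destruct (IHn u Hu) as (a & m & w' & Hm & Hw' & Hue).
    destruct (classic (germ_eq p g)) as [Hpg | Hpg].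
    + exists (c + a), m, w'; repeat split; auto.
      apply (ev3 _ _ _ _ He Hue Hpg); intros x -> -> ->; ring.
    + exists a, (S m), (fun x => c * p x + w' x); repeat split; [lia| |].
      * simpl. exists p, c, w'; repeat split; auto. exists 0; intros; ring.
      * apply (ev2 _ _ _ He Hue); intros x -> ->; ring.
Qed.

Definition sep (a b : R -> R) := forall eps, 0 < eps ->
  eventually (fun x => Rabs (a x) <= eps * b x).
Definition lim_rel (v h : R -> R) (c : R) := forall eps, 0 < eps ->
  eventually (fun x => Rabs (v x - c * h x) <= eps * h x).
Definition Pw (P : (R -> R) -> Prop) := forall g1 g2, P g1 -> P g2 ->
  germ_eq g1 g2 \/ sep g1 g2 \/ sep g2 g1.

Lemma lead n : forall (P : (R -> R) -> Prop),
  (forall g, P g -> eventually (fun x => 0 < g x)) -> Pw P ->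
  forall v, SpN P n v -> eventually (fun x => v x = 0) \/
    exists h c, P h /\ c <> 0 /\ lim_rel v h c.
Proof.
  induction n as [n IH] using lt_wf_ind.
  destruct n as [|n]; simpl; [intros; auto|].
  intros P Hpos Hpw v (g & c & w & Hg & Hw & He).
  destruct (partition _ _ g _ Hw) as (a & m & w' & Hm & Hw' & Hwe).
  assert (He2 : eventually (fun x => v x = (c + a) * g x + w' x)).
  { apply (ev2 _ _ _ He Hwe); intros x -> ->; ring. }
  assert (Hpos' : forall p, (P p /\ ~ germ_eq p g) -> eventually (fun x => 0 < p x)).
  { intros p [Hp _]; auto. }
  assert (Hpw' : Pw (fun p => P p /\ ~ germ_eq p g)).
  { intros g1 g2 [H1 _] [H2 _]; auto. }
  destruct (IH m ltac:(lia) _ Hpos' Hpw' w' Hw') as [Hz | (h & d & [Hh Hhg] & Hd & Hl)].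
  - destruct (Req_dec (c + a) 0) as [E|E].
    + left. apply (ev2 _ _ _ He2 Hz); intros x -> ->; rewrite E; ring.
    + right. exists g, (c + a); repeat split; auto.
      intros eps Heps. apply (ev3 _ _ _ _ He2 Hz (Hpos g Hg)); intros x -> -> Hgx.
      replace ((c + a) * g x + 0 - (c + a) * g x) with 0 by ring.
      rewrite Rabs_R0. nra.
  - destruct (Req_dec (c + a) 0) as [E|E].
    + right. exists h, d; repeat split; auto.
      intros eps Heps. apply (ev2 _ _ _ He2 (Hl eps Heps)); intros x -> H.
      rewrite E. replace (0 * g x + w' x) with (w' x) by ring. auto.
    + destruct (Hpw h g Hh Hg) as [Hhg'|[Hs|Hs]]; [contradiction| |].
      * (* h small wrt g: lead is g *)
        right. exists g, (c + a); repeat split; auto.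
        intros eps Heps.
        set (k := Rabs d + 1).
        assert (Hk : 0 < k) by (unfold k; pose proof (Rabs_pos d); lra).
        apply (ev4 _ _ _ _ _ He2 (Hl 1 ltac:(lra)) (Hs (eps / k) ltac:(apply Rdiv_lt_0_compat; lra)) (Hpos h Hh)).
        intros x -> H1 H2 Hhx.
        replace ((c + a) * g x + w' x - (c + a) * g x) with (w' x) by ring.
        apply absle in H1. rewrite Rabs_pos_eq in H2 by lra.
        assert (Hdd : - Rabs d <= d <= Rabs d) by (apply absle; lra).
        assert (Hb : Rabs (w' x) <= k * h x) by (apply absle; unfold k; nra).
        assert (k * h x <= k * (eps / k * g x)) by (apply Rmult_le_compat_l; lra).
        replace (k * (eps / k * g x)) with (eps * g x) in H by (field; lra). lra.
      * right. exists h, d; repeat split; auto.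
        intros eps Heps.
        set (k := Rabs (c + a) + 1).
        assert (Hk : 0 < k) by (unfold k; pose proof (Rabs_pos (c+a)); lra).
        apply (ev4 _ _ _ _ _ He2 (Hl (eps/2) ltac:(lra)) (Hs (eps / 2 / k) ltac:(apply Rdiv_lt_0_compat; lra)) (Hpos g Hg)).
        intros x -> H1 H2 Hgx.
        replace ((c + a) * g x + w' x - d * h x) with ((c+a) * g x + (w' x - d * h x)) by ring.
        rewrite Rabs_pos_eq in H2 by lra.
        assert (Hc: Rabs ((c + a) * g x) <= k * g x).
        { rewrite Rabs_mult, (Rabs_pos_eq (g x)) by lra. unfold k; nra. }
        assert (k * g x <= k * (eps / 2 / k * h x)) by (apply Rmult_le_compat_l; lra).
        replace (k * (eps / 2 / k * h x)) with (eps / 2 * h x) in H by (field; lra).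
        pose proof (Rabs_triang ((c + a) * g x) (w' x - d * h x)). lra.
Qed.

Definition Good (v : R -> R) := eventually (fun x => v x = 0) \/
  tends_to_pinfty v \/ tends_to_pinfty (fun x => - v x).

Lemma tends_pos f : tends_to_pinfty f -> eventually (fun x => 0 < f x).
Proof. intros H; apply H. Qed.

Lemma lead_good P n v : (forall g, P g -> tends_to_pinfty g) -> Pw P -> SpN P n v -> Good v.
Proof.
  intros Ht Hpw Hv.
  destruct (lead n P (fun g Hg => tends_pos g (Ht g Hg)) Hpw v Hv) as [H|(h & c & Hh & Hc & Hl)].
  { left; auto. }
  right. destruct (Rlt_or_le 0 c) as [Hc0|Hc0].
  - left. intros B.
    apply (ev3 _ _ _ _ (Hl (c/2) ltac:(lra)) (Ht h Hh (2 * B / c)) (tends_pos h (Ht h Hh))).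
    intros x H1 H2 H3. apply absle in H1.
    assert (c * (2 * B / c) = 2 * B) by (field; lra). nra.
  - right. intros B. assert (Hc1 : c < 0) by lra.
    apply (ev3 _ _ _ _ (Hl (-c/2) ltac:(lra)) (Ht h Hh (- 2 * B / c)) (tends_pos h (Ht h Hh))).
    intros x H1 H2 H3. apply absle in H1.
    assert (c * (- 2 * B / c) = - 2 * B) by (field; lra). nra.
Qed.

Lemma ln_tends f : tends_to_pinfty f -> tends_to_pinfty (fun x => ln (f x)).
Proof.
  intros H B. apply (ev1 _ _ (H (exp B))). intros x Hx.
  rewrite <- (ln_exp B) at 1. apply ln_increasing; auto. apply exp_pos.
Qed.

Lemma iter_ln_tends k : tends_to_pinfty (iter_ln k).
Proof.
  induction k; simpl.
  - intros B; exists B; auto.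
  - apply (ln_tends (iter_ln k)); auto.
Qed.

Lemma ln_lt_id y : 0 < y -> ln y < y.
Proof.
  intros Hy. destruct (Req_dec (ln y) 0) as [E|E]. lra.
  pose proof (exp_ineq1 _ E). rewrite exp_ln in H; lra.
Qed.

Lemma ln_small eps : 0 < eps -> exists Y, forall y, Y < y -> 0 < ln y <= eps * y.
Proof.
  intros He. set (t := 2 / eps).
  assert (Ht : 0 < t) by (unfold t; apply Rdiv_lt_0_compat; lra).
  exists (t * t + 1). intros y Hy.
  assert (Htt : 0 <= t * t) by (apply Rmult_le_pos; lra).
  assert (Hy0 : 0 < y) by lra.
  set (s := sqrt y). assert (Hs : 0 < s) by (apply sqrt_lt_R0; auto).
  assert (Hss : s * s = y) by (apply sqrt_sqrt; lra).
  assert (Hst : t < s) by (destruct (Rlt_or_le t s) as [?|Hle]; [auto| assert (s * s <= t * t) by (apply Rmult_le_compat; lra); lra]).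
  split.
  - rewrite <- ln_1. apply ln_increasing; lra.
  - rewrite <- Hss, ln_mult by auto. pose proof (ln_lt_id s Hs).
    assert (E2 : eps * t = 2) by (unfold t; field; lra).
    assert (E3 : eps * t * s <= eps * (s * s)) by (rewrite <- Rmult_assoc; apply Rmult_le_compat_r; [lra| apply Rmult_le_compat_l; lra]).
    rewrite E2 in E3. lra.
Qed.

Lemma sep_ln k : sep (iter_ln (S k)) (iter_ln k).
Proof.
  intros eps He. destruct (ln_small eps He) as [Y HY].
  apply (ev1 _ _ (iter_ln_tends k Y)). intros x Hx. simpl.
  destruct (HY _ Hx). rewrite Rabs_pos_eq; lra.
Qed.

Lemma sep_trans a b c : sep a b -> sep b c -> sep a c.
Proof.
  intros H1 H2 eps He. apply (ev2 _ _ _ (H1 1 ltac:(lra)) (H2 eps He)).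
  intros x A B. pose proof (Rle_abs (b x)). lra.
Qed.

Lemma sep_germ a b a' b' : sep a b -> germ_eq a a' -> germ_eq b b' -> sep a' b'.
Proof.
  intros H Ha Hb eps He. apply (ev3 _ _ _ _ (H eps He) Ha Hb). intros x A <- <-; auto.
Qed.

Lemma sep_iter j d : sep (iter_ln (S d + j)) (iter_ln j).
Proof.
  induction d.
  - apply sep_ln.
  - apply (sep_trans _ (iter_ln (S d + j))); auto.
    replace (S (S d) + j)%nat with (S (S d + j)) by lia. apply sep_ln.
Qed.

Lemma germ_sym f g : germ_eq f g -> germ_eq g f.
Proof. intros H; apply (ev1 _ _ H); auto. Qed.
Lemma germ_trans f g h : germ_eq f g -> germ_eq g h -> germ_eq f h.
Proof. intros H1 H2; apply (ev2 _ _ _ H1 H2); intros; congruence. Qed.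

Definition G0 (g : R -> R) := exists k, (1 <= k)%nat /\ germ_eq g (iter_ln k).

Lemma Pw_G0 : Pw G0.
Proof.
  intros g1 g2 (j & _ & H1) (k & _ & H2).
  destruct (lt_eq_lt_dec j k) as [[Hl| E]|Hl].
  - right; right. replace k with (S (k - j - 1) + j)%nat in H2 by lia.
    eapply sep_germ; [apply sep_iter| apply germ_sym| apply germ_sym]; eauto.
  - subst k. left. eapply germ_trans; eauto. apply germ_sym; auto.
  - right; left. replace j with (S (j - k - 1) + k)%nat in H1 by lia.
    eapply sep_germ; [apply sep_iter| apply germ_sym| apply germ_sym]; eauto.
Qed.

Lemma G0_tends g : G0 g -> tends_to_pinfty g.
Proof.
  intros (k & _ & H) B. apply (ev2 _ _ _ (iter_ln_tends k B) H). intros x A ->; auto.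
Qed.

Fixpoint Gen (n : nat) : (R -> R) -> Prop :=
  match n with
  | O => G0
  | S n' => fun g => Gen n' g \/
      (tends_to_pinfty g /\ exists m, SpN (Gen n') m (fun x => ln (g x)))
  end.

Definition Lvl n g := tends_to_pinfty g /\ exists m, SpN (Gen n) m (fun x => ln (g x)).

Lemma Gen_tends n g : Gen n g -> tends_to_pinfty g.
Proof. revert g; induction n; simpl; intros g H; [apply G0_tends; auto|]. destruct H as [H|[H _]]; auto. Qed.

Lemma Gen_mono n m g : (n <= m)%nat -> Gen n g -> Gen m g.
Proof. induction 1; simpl; auto. Qed.

Lemma Lvl_mono n m g : (n <= m)%nat -> Lvl n g -> Lvl m g.
Proof.
  intros Hnm [Ht [k Hk]]. split; auto. exists k.
  apply (SpN_mono (Gen n)); auto. intros; eapply Gen_mono; eauto.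
Qed.

Lemma G0_Lvl0 g : G0 g -> Lvl 0 g.
Proof.
  intros Hg. split; [apply G0_tends; auto|]. destruct Hg as (k & Hk & H).
  exists 1%nat. simpl. exists (iter_ln (S k)), 1, (fun _ => 0). repeat split.
  - exists (S k); split; [lia|]. exists 0; auto.
  - exists 0; auto.
  - apply (ev1 _ _ H). intros x ->. simpl. ring.
Qed.

Lemma Gen_Lvl n g : Gen n g -> Lvl n g.
Proof.
  revert g; induction n; simpl; intros g H.
  - apply G0_Lvl0; auto.
  - apply (Lvl_mono n); [lia|]. destruct H as [H|H]; auto.
Qed.

Lemma Lvl_pos n g : Lvl n g -> eventually (fun x => 0 < g x).
Proof. intros [H _]; apply tends_pos; auto. Qed.

Lemma Pw_Gen n : Pw (Gen n).
Proof.
  induction n.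
  - apply Pw_G0.
  - assert (C : forall m v, SpN (Gen n) m v -> Good v).
    { intros m v Hv. apply (lead_good (Gen n) m); auto. apply Gen_tends. }
    assert (HL : forall g, Gen (S n) g -> Lvl n g).
    { simpl; intros g [H|H]; [apply Gen_Lvl|]; auto. }
    intros g1 g2 H1 H2. apply HL in H1, H2.
    pose proof (Lvl_pos _ _ H1) as P1. pose proof (Lvl_pos _ _ H2) as P2.
    destruct H1 as [_ [m1 S1]], H2 as [_ [m2 S2]].
    destruct (C _ _ (SpN_sub _ _ _ _ _ S1 S2)) as [Z|[T|T]].
    + left. apply (ev3 _ _ _ _ Z P1 P2). intros x E A B.
      rewrite <- (exp_ln (g1 x)), <- (exp_ln (g2 x)) by auto. f_equal; lra.
    + right; right. intros eps He.
      apply (ev3 _ _ _ _ (T (- ln eps)) P1 P2). intros x E A B.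
      rewrite Rabs_pos_eq by lra. apply Rlt_le. apply ln_lt_inv; auto. nra.
      rewrite ln_mult by auto. lra.
    + right; left. intros eps He.
      apply (ev3 _ _ _ _ (T (- ln eps)) P1 P2). intros x E A B.
      rewrite Rabs_pos_eq by lra. apply Rlt_le. apply ln_lt_inv; auto. nra.
      rewrite ln_mult by auto. lra.
Qed.

Lemma Good_Gen n m v : SpN (Gen n) m v -> Good v.
Proof. intros H. apply (lead_good (Gen n) m); auto. apply Gen_tends. apply Pw_Gen. Qed.

Lemma inH_Lvl f : inH f -> exists n, Lvl n f.
Proof.
  induction 1.
  - destruct IHinH as [n [Ht [m Hm]]]. exists n. split.
    + intros B. apply (ev2 _ _ _ (Ht B) H0). intros x A <-; auto.
    + exists m. apply (SpN_germ _ _ _ _ Hm). apply (ev1 _ _ H0). intros x ->; auto.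
  - exists 0%nat. split; [apply iter_ln_tends|]. exists 1%nat. simpl.
    exists (iter_ln (S k)), 1, (fun _ => 0). repeat split.
    + exists (S k); split; [lia|]. exists 0; auto.
    + exists 0; auto.
    + exists 0. intros; simpl; ring.
  - destruct IHinH as [n [Ht [m Hm]]]. exists (S n). split.
    + intros B. apply (ev1 _ _ (Ht B)). intros x Hx.
      destruct (Req_dec (f x) 0) as [E|E]. rewrite E, exp_0. lra.
      pose proof (exp_ineq1 _ E); lra.
    + exists 1%nat. simpl. exists f, 1, (fun _ => 0). repeat split.
      * right. split; eauto.
      * exists 0; auto.
      * exists 0. intros; rewrite ln_exp; ring.
  - destruct IHinH as [n [Ht [m Hm]]]. exists n. split.
    + intros B. destruct (Rle_or_lt B 0) as [HB|HB].
      * exists 0; intros; unfold Rpower; pose proof (exp_pos (alpha * ln (f x))); lra.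
      * apply (ev1 _ _ (Ht (exp (ln B / alpha)))). intros x Hx. unfold Rpower.
        rewrite <- (exp_ln B) at 1 by auto. apply exp_increasing.
        assert (ln B / alpha < ln (f x)).
        { rewrite <- (ln_exp (ln B / alpha)). apply ln_increasing; auto. apply exp_pos. }
        assert (alpha * (ln B / alpha) = ln B) by (field; lra). nra.
    + exists m. apply (SpN_germ _ _ (fun x => alpha * ln (f x))).
      apply SpN_scale; auto. apply (ev1 _ _ H0). intros x Hx. unfold Rpower. rewrite ln_exp; auto.
  - destruct IHinH1 as [n1 L1], IHinH2 as [n2 L2].
    apply (Lvl_mono _ (Nat.max n1 n2)) in L1, L2; try lia.
    pose proof (Lvl_pos _ _ L1) as P1. pose proof (Lvl_pos _ _ L2) as P2.
    destruct L1 as [T1 [m1 S1]], L2 as [T2 [m2 S2]].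
    exists (Nat.max n1 n2). split.
    + intros B. apply (ev2 _ _ _ (T1 1) (T2 (Rabs B))). intros x A C.
      pose proof (Rle_abs B). pose proof (Rabs_pos B).
      assert (1 * g x < f x * g x) by (apply Rmult_lt_compat_r; lra). lra.
    + exists (m1 + m2)%nat. apply (SpN_germ _ _ _ _ (SpN_add _ _ _ _ _ S1 S2)).
      apply (ev2 _ _ _ P1 P2). intros x A C. rewrite ln_mult; auto.
  - destruct IHinH1 as [n1 L1], IHinH2 as [n2 L2].
    apply (Lvl_mono _ (Nat.max n1 n2)) in L1, L2; try lia.
    pose proof (Lvl_pos _ _ L1) as P1. pose proof (Lvl_pos _ _ L2) as P2.
    destruct L1 as [T1 [m1 S1]], L2 as [T2 [m2 S2]].
    exists (Nat.max n1 n2). split; auto.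
    exists (m1 + m2)%nat. apply (SpN_germ _ _ _ _ (SpN_sub _ _ _ _ _ S1 S2)).
    apply (ev2 _ _ _ P1 P2). intros x A C. unfold Rdiv.
    rewrite ln_mult, ln_Rinv; auto. apply Rinv_0_lt_compat; auto.
Qed.

Theorem mainTheorem3 (f g : R -> R) :
  inH f -> inH g -> ~ germ_eq f g ->
  ~ (exists M : R, 0 < M /\
       eventually (fun x => Rabs (f x) <= M * Rabs (g x) /\
                            Rabs (g x) <= M * Rabs (f x))).
Proof.
  intros Hf Hg Hne [M [HM HE]].
  destruct (inH_Lvl f Hf) as [n1 L1], (inH_Lvl g Hg) as [n2 L2].
  apply (Lvl_mono _ (Nat.max n1 n2)) in L1, L2; try lia.
  pose proof (Lvl_pos _ _ L1) as P1. pose proof (Lvl_pos _ _ L2) as P2.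
  destruct L1 as [T1 [m1 S1]], L2 as [T2 [m2 S2]].
  destruct (Good_Gen _ _ _ (SpN_sub _ _ _ _ _ S1 S2)) as [Z|[T|T]].
  - apply Hne. apply (ev3 _ _ _ _ Z P1 P2). intros x E A B.
    rewrite <- (exp_ln (f x)), <- (exp_ln (g x)) by auto. f_equal; lra.
  - destruct (ev4 _ _ _ _ (fun _ => False) (T (ln M)) P1 P2 HE) as [a Ha].
    + intros x E A B [C D]. rewrite !Rabs_pos_eq in C by lra.
      assert (ln (M * g x) < ln (f x)) by (rewrite ln_mult by auto; lra).
      apply ln_lt_inv in H; nra.
    + apply (Ha (a + 1)); lra.
  - destruct (ev4 _ _ _ _ (fun _ => False) (T (ln M)) P1 P2 HE) as [a Ha].
    + intros x E A B [C D]. rewrite !Rabs_pos_eq in D by lra.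
      assert (ln (M * f x) < ln (g x)) by (rewrite ln_mult by auto; lra).
      apply ln_lt_inv in H; nra.
    + apply (Ha (a + 1)); lra.
Qed.
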